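(* Let a $d$-dimensional Hegselmann–Krause system with $n$ agents, confidence bound $\varepsilon>0$, arbitrary initial positions, and social network the complete graph $K_n$ evolve under uniform random asynchronous updates, and let $\delta>0$. Then the expected convergence time to a $\delta$-stable state is at most $\operatorname{O}\big(n^3(n^2+(\varepsilon/\delta)^2)\big)$.
   Context: A $d$-dimensional Hegselmann–Krause system (HKS) consists of a finite undirected graph $G=(V,E)$ (the social network) whose $n=|V|$ nodes are agents, a confidence bound $\varepsilon>0$, and initial positions $x_v(0)\in\mathbb{R}^d$. In a state (positions $x_v$), the influencing neighborhood of $v$ is $N_v=\{u:\{u,v\}\in E,\ \|x_u-x_v\|_2\le\varepsilon\}\cup\{v\}$; the influence network is $(V,E_I)$ with $E_I=\{\{u,v\}\in E:\|x_u-x_v\|_2\le\varepsilon\}$; the length of an edge $\{u,v\}$ is $\|x_u-x_v\|_2$. Uniform random asynchronous updates: at each step $t$ one agent $v$ is chosen uniformly at random (independently) and set to $x_v(t+1)=\frac{1}{|N_v(t)|}\sum_{u\in N_v(t)}x_u(t)$, all others unchanged. A state is $\delta$-stable if every edge of the influence network has length at most $\delta$; the convergence time is the number of steps until a $\delta$-stable state is first reached. Constants in the $\operatorname{O}$-notation are absolute. *)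

(* Defs.v *)
From HB Require Import structures.
From mathcomp Require Import all_boot all_order all_algebra.
From mathcomp Require Import all_classical all_reals all_analysis.
Set Implicit Arguments. Unset Strict Implicit. Unset Printing Implicit Defensive.
Import Order.TTheory GRing.Theory Num.Theory.
Local Open Scope ring_scope.

Section HK.
Variables (R : realType) (d n : nat).

Definition point := 'rV[R]_d.
Definition state := 'I_n -> point.

Definition dist2 (p q : point) : R :=
  Num.sqrt (\sum_(i < d) (p ord0 i - q ord0 i) ^+ 2).

Definition complete_graph : rel 'I_n := fun u v => u != v.

Variables (G : rel 'I_n) (eps : R).

Definition nbhd (x : state) (v : 'I_n) : {set 'I_n} :=
  [set u | (u == v) || (G u v && (dist2 (x u) (x v) <= eps))].

Definition hk_update (x : state) (v : 'I_n) : state :=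
  fun u => if u == v then (#|nbhd x v|%:R)^-1 *: \sum_(w in nbhd x v) x w
           else x u.

Definition run (x0 : state) (s : seq 'I_n) : state := foldl hk_update x0 s.

Definition stable (delta : R) (x : state) : bool :=
  [forall u, forall v, (G u v && (dist2 (x u) (x v) <= eps)) ==>
                         (dist2 (x u) (x v) <= delta)].

(* Under uniform random asynchronous updates the first t chosen agents form a
   uniformly random element of 'I_n^t. The convergence time T exceeds t iff
   none of the states at times 0..t is delta-stable. *)
Definition tail_prob (delta : R) (x0 : state) (t : nat) : R :=
  #|[set s : t.-tuple 'I_n |
       [forall k : 'I_t.+1, ~~ stable delta (run x0 (take k s))]]|%:R
  / (n ^ t)%:R.

(* Expected convergence time E[T] = sum_{t >= 0} P(T > t)  (in \bar R,
   possibly +oo). *)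
Definition expected_conv_time (delta : R) (x0 : state) : \bar R :=
  (\sum_(0 <= t <oo) (tail_prob delta x0 t)%:E)%E.

End HK.

(* Main.v *)
Require Import Defs.
From HB Require Import structures.
From mathcomp Require Import all_boot all_order all_algebra.
From mathcomp Require Import all_classical all_reals all_analysis.
From mathcomp Require Import ring lra.
Import Order.TTheory GRing.Theory Num.Theory.
Local Open Scope ring_scope.

Section HKProof.
Variables (R : realType) (d n : nat) (eps delta : R).
Hypotheses (eps_gt0 : 0 < eps) (delta_gt0 : 0 < delta).

Let G := @complete_graph n.

Definition D2 (p q : Defs.point R d) : R := \sum_(i < d) (p ord0 i - q ord0 i) ^+ 2.

Lemma D2_ge0 (p q : Defs.point R d) : 0 <= D2 p q.
Proof. by apply: sumr_ge0 => i _; rewrite sqr_ge0. Qed.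

Lemma D2C (p q : Defs.point R d) : D2 p q = D2 q p.
Proof. by apply: eq_bigr => i _; rewrite -sqrrN opprB. Qed.

Lemma D2xx (p : Defs.point R d) : D2 p p = 0.
Proof. by rewrite /D2 big1 // => i _; rewrite subrr expr0n. Qed.

Lemma sqrt_le (x e : R) : 0 <= e -> 0 <= x -> (Num.sqrt x <= e) = (x <= e ^+ 2).
Proof.
move=> e0 x0; rewrite -{1}(ger0_norm e0) -sqrtr_sqr ler_sqrt //.
by rewrite sqr_ge0.
Qed.

Lemma dist_le (p q : Defs.point R d) (e : R) : 0 <= e -> (dist2 p q <= e) = (D2 p q <= e ^+ 2).
Proof. by move=> e0; rewrite /dist2 sqrt_le // D2_ge0. Qed.

Lemma dist2C (p q : Defs.point R d) : dist2 p q = dist2 q p.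
Proof. by rewrite /dist2 -/(D2 p q) -/(D2 q p) D2C. Qed.

Notation N x v := (nbhd G eps x v).

Lemma inN (x : Defs.state R d n) v u :
  (u \in N x v) = (u == v) || ((u != v) && (D2 (x u) (x v) <= eps ^+ 2)).
Proof. by rewrite inE /G /complete_graph dist_le // ltW. Qed.

Lemma NC (x : Defs.state R d n) v u : (u \in N x v) = (v \in N x u).
Proof. by rewrite !inN eq_sym D2C. Qed.

Lemma N_self (x : Defs.state R d n) v : v \in N x v.
Proof. by rewrite inN eqxx. Qed.

Definition ybar (x : Defs.state R d n) v : Defs.point R d :=
  (#|N x v|%:R)^-1 *: \sum_(w in N x v) x w.

Lemma ybarE (x : Defs.state R d n) v i :
  ybar x v ord0 i = (#|N x v|%:R)^-1 * \sum_(w in N x v) x w ord0 i.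
Proof. by rewrite /ybar mxE summxE. Qed.

Lemma updE (x : Defs.state R d n) v u :
  hk_update G eps x v u = if u == v then ybar x v else x u.
Proof. by []. Qed.

Lemma cardN_gt0 (x : Defs.state R d n) v : (0 < #|N x v|)%N.
Proof. by apply/card_gt0P; exists v; exact: N_self. Qed.

Lemma cardN_le (x : Defs.state R d n) v : (#|N x v| <= n)%N.
Proof. by rewrite -[X in (_ <= X)%N]card_ord max_card. Qed.


Definition phi (p q : Defs.point R d) := Num.min (D2 p q) (eps ^+ 2).
Definition Phi (x : Defs.state R d n) := \sum_u \sum_v phi (x u) (x v).

Lemma phi_ge0 p q : 0 <= phi p q.
Proof. by rewrite /phi le_min D2_ge0 sqr_ge0. Qed.

Lemma Phi_ge0 x : 0 <= Phi x.
Proof. by apply: sumr_ge0 => u _; apply: sumr_ge0 => v _; exact: phi_ge0. Qed.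

Lemma Phi_le x : Phi x <= n%:R ^+ 2 * eps ^+ 2.
Proof.
rewrite /Phi (@le_trans _ _ (\sum_(u < n) \sum_(v < n) eps ^+ 2)) //.
  by apply: ler_sum => u _; apply: ler_sum => v _; rewrite /phi ge_min lexx orbT.
rewrite !sumr_const card_ord -mulrnA -[X in X <= _]mulr_natr natrM.
by rewrite le_eqVlt; apply/orP; left; apply/eqP; ring.
Qed.

Lemma eqle (a b : R) : a = b -> a <= b.
Proof. by move=> ->. Qed.

Lemma sum_delta (w : 'I_n) (F : 'I_n -> R) : \sum_u (u == w)%:R * F u = F w.
Proof.
rewrite (bigD1 w) //= eqxx mul1r big1 ?addr0 // => u /negbTE ->.
by rewrite mul0r.
Qed.

Lemma mean_id x w :
  \sum_(z in N x w) (D2 (x z) (ybar x w) - D2 (x z) (x w)) =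
  - (#|N x w|%:R * D2 (x w) (ybar x w)).
Proof.
set m := #|N x w|%:R.
have m0 : m != 0 by rewrite pnatr_eq0 -lt0n cardN_gt0.
rewrite /D2 (eq_bigr (fun z => \sum_(i < d) ((x z ord0 i - ybar x w ord0 i) ^+ 2
   - (x z ord0 i - x w ord0 i) ^+ 2))); last by move=> z _; rewrite sumrB.
rewrite exchange_big /= mulr_sumr -sumrN; apply: eq_bigr => i _.
set c := x w ord0 i; set y := ybar x w ord0 i.
have Sa : \sum_(z in N x w) x z ord0 i = m * y.
  by rewrite /y ybarE mulrA mulfV // mul1r.
transitivity (\sum_(z in N x w) ((c - y) * ((2 * x z ord0 i - y) - c))).
  by apply: eq_bigr => z _; rewrite /c /y; ring.
rewrite -mulr_sumr sumrB sumrB -mulr_sumr Sa !sumr_const.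
rewrite -[y *+ _]mulr_natr -[c *+ _]mulr_natr -/m.
ring.
Qed.


Lemma Phi_upd x w :
  Phi (hk_update G eps x w) <= Phi x - 2 * (#|N x w|%:R * D2 (x w) (ybar x w)).
Proof.
set y := ybar x w; set x' := hk_update G eps x w.
pose h z := if z \in N x w then D2 (x z) y - D2 (x z) (x w) else 0.
have hsum : \sum_z h z = - (#|N x w|%:R * D2 (x w) y).
  by rewrite -mean_id [in RHS]big_mkcond.
have e2 : 0 <= eps ^+ 2 by rewrite sqr_ge0.
have key u v : phi (x' u) (x' v) <=
    phi (x u) (x v) + ((u == w)%:R * h v + (v == w)%:R * h u).
  rewrite /x' !updE /phi /h.
  case: (eqVneq u w) => [->|uw]; case: (eqVneq v w) => [->|vw] /=.
  - rewrite !D2xx N_self !mul1r (min_l e2) subr0 add0r.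
    by have := D2_ge0 (x w) y; lra.
  - rewrite mul1r mul0r addr0.
    case: (boolP (v \in N x w)) => vN.
      move: (vN); rewrite inN (negbTE vw) /= => vN'.
      rewrite D2C in vN'; rewrite (min_l vN') (D2C y).
      rewrite (@le_trans _ _ (D2 (x v) y)) //; first by rewrite ge_min lexx.
      by rewrite (D2C (x v) (x w)); lra.
    move: (vN); rewrite inN (negbTE vw) /= -ltNge => vN'.
    rewrite D2C in vN'; rewrite (min_r (ltW vN')) addr0.
    by rewrite ge_min lexx orbT.
  - rewrite mul1r mul0r add0r.
    case: (boolP (u \in N x w)) => uN.
      move: (uN); rewrite inN (negbTE uw) /= => uN'.
      rewrite (min_l uN').
      rewrite (@le_trans _ _ (D2 (x u) y)) //; first by rewrite ge_min lexx.
      by lra.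
    move: (uN); rewrite inN (negbTE uw) /= -ltNge => uN'.
    rewrite (min_r (ltW uN')) addr0.
    by rewrite ge_min lexx orbT.
  - by rewrite !mul0r !addr0.
rewrite /Phi (@le_trans _ _ (\sum_u \sum_v (phi (x u) (x v) +
    ((u == w)%:R * h v + (v == w)%:R * h u)))) //.
  by apply: ler_sum => u _; apply: ler_sum => v _; exact: key.
rewrite (eq_bigr (fun u => \sum_v phi (x u) (x v) +
   ((u == w)%:R * \sum_v h v + h u))); last first.
  by move=> u _; rewrite big_split /= big_split /= mulr_sumr (sum_delta w (fun _ => h u)).
rewrite big_split /= big_split /= sum_delta hsum; apply: eqle; rewrite -/y; ring.
Qed.



Definition md (x : Defs.state R d n) :=
  \sum_w #|N x w|%:R * D2 (x w) (ybar x w).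

Lemma md_ge0 x : 0 <= md x.
Proof. by apply: sumr_ge0 => w _; rewrite mulr_ge0 ?ler0n ?D2_ge0. Qed.

Lemma drift_sum x :
  \sum_v Phi (hk_update G eps x v) <= n%:R * Phi x - 2 * md x.
Proof.
rewrite (@le_trans _ _ (\sum_v (Phi x - 2 * (#|N x v|%:R * D2 (x v) (ybar x v))))) //.
  by apply: ler_sum => v _; exact: Phi_upd.
by rewrite sumrB sumr_const card_ord -[Phi x *+ n]mulr_natl /md mulr_sumr.
Qed.

Lemma sum_ge_term (I : finType) (F : I -> R) (i0 : I) :
  (forall i, 0 <= F i) -> F i0 <= \sum_i F i.
Proof.
move=> F0; rewrite (bigD1 i0) //= lerDl; apply: sumr_ge0 => i _; exact: F0.
Qed.

Lemma CS (I : finType) (F H : I -> R) :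
  (\sum_i F i * H i) ^+ 2 <= (\sum_i F i ^+ 2) * (\sum_i H i ^+ 2).
Proof.
have E1 : (\sum_i F i ^+ 2) * (\sum_j H j ^+ 2) = \sum_i \sum_j F i ^+ 2 * H j ^+ 2.
  by rewrite mulr_suml; apply: eq_bigr => i _; rewrite mulr_sumr.
have E2 : (\sum_i F i * H i) ^+ 2 = \sum_i \sum_j (F i * H i) * (F j * H j).
  by rewrite expr2 mulr_suml; apply: eq_bigr => i _; rewrite mulr_sumr.
have E3 : \sum_i \sum_j F j ^+ 2 * H i ^+ 2 = \sum_i \sum_j F i ^+ 2 * H j ^+ 2.
  by rewrite exchange_big.
have S : 0 <= \sum_i \sum_j (F i * H j - F j * H i) ^+ 2.
  by apply: sumr_ge0 => i _; apply: sumr_ge0 => j _; exact: sqr_ge0.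
have E4 : \sum_i \sum_j (F i * H j - F j * H i) ^+ 2 =
   \sum_i \sum_j F i ^+ 2 * H j ^+ 2 + \sum_i \sum_j F j ^+ 2 * H i ^+ 2
   - 2 * \sum_i \sum_j (F i * H i) * (F j * H j).
  rewrite mulr_sumr -big_split -sumrB /=; apply: eq_bigr => i _.
  rewrite mulr_sumr -big_split -sumrB /=; apply: eq_bigr => j _; ring.
rewrite E1 E2; rewrite E4 E3 in S; lra.
Qed.

Lemma unstable_edge (x : Defs.state R d n) : ~~ stable G eps delta x ->
  exists u v, [/\ u != v, D2 (x u) (x v) <= eps ^+ 2 & delta ^+ 2 < D2 (x u) (x v)].
Proof.
move=> /forallPn [u /forallPn [v]]; rewrite negb_imply => /andP [/andP [uv de] dd].
exists u, v; split => //; first by rewrite -dist_le // ltW.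
by rewrite ltNge -dist_le ?(ltW delta_gt0).
Qed.

Lemma sumA (x : Defs.state R d n) w (F : 'I_n -> R) :
  \sum_z (z \in N x w)%:R * F z = \sum_(z in N x w) F z.
Proof.
rewrite [RHS]big_mkcond; apply: eq_bigr => z _.
by case: (z \in N x w); rewrite ?mul1r ?mul0r.
Qed.

Lemma clique_case (x : Defs.state R d n) u v :
  (forall a m b, a \in N x m -> b \in N x m -> D2 (x a) (x b) <= eps ^+ 2) ->
  u != v -> D2 (x u) (x v) <= eps ^+ 2 -> delta ^+ 2 < D2 (x u) (x v) ->
  delta ^+ 2 <= 4 * md x.
Proof.
move=> H uv de dd.
have sub : forall u v, u != v -> D2 (x u) (x v) <= eps ^+ 2 ->
    forall z, z \in N x u -> z \in N x v.
  move=> u' v' uv' de' z zu; rewrite inN; case: (eqVneq z v') => //= zv.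
  apply: (H z u' v') => //; rewrite inN eq_sym (negbTE uv') /= D2C //.
have Nuv : N x u = N x v.
  apply/setP => z; apply/idP/idP; first exact: sub.
  by apply: sub; rewrite 1?eq_sym // D2C.
have yuv : ybar x u = ybar x v by rewrite /ybar Nuv.
set y := ybar x v.
have tri : D2 (x u) (x v) <= 2 * D2 (x u) y + 2 * D2 (x v) y.
  rewrite /D2 !mulr_sumr -big_split /=; apply: ler_sum => i _; have := sqr_ge0 (x u ord0 i + x v ord0 i - 2 * y ord0 i); nra.
have hu : D2 (x u) y <= md x.
  rewrite /md (@le_trans _ _ (#|N x u|%:R * D2 (x u) (ybar x u))) //.
    rewrite yuv -/y; have m1 : 1 <= #|N x u|%:R :> R by rewrite ler1n cardN_gt0.
    by have := D2_ge0 (x u) y; nra.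
  apply: (@sum_ge_term _ (fun w => #|N x w|%:R * D2 (x w) (ybar x w)) u) => w.
  by rewrite mulr_ge0 ?ler0n ?D2_ge0.
have hv : D2 (x v) y <= md x.
  rewrite /md (@le_trans _ _ (#|N x v|%:R * D2 (x v) (ybar x v))) //.
    rewrite -/y; have m1 : 1 <= #|N x v|%:R :> R by rewrite ler1n cardN_gt0.
    by have := D2_ge0 (x v) y; nra.
  apply: (@sum_ge_term _ (fun w => #|N x w|%:R * D2 (x w) (ybar x w)) v) => w.
  by rewrite mulr_ge0 ?ler0n ?D2_ge0.
lra.
Qed.


Lemma noncl (x : Defs.state R d n) a m b :
  a \in N x m -> b \in N x m -> eps ^+ 2 < D2 (x a) (x b) ->
  eps ^+ 2 <= 16 * (n%:R ^+ 2 * md x).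
Proof.
move=> am bm Fab.
pose f i := x a ord0 i - x b ord0 i.
pose F := D2 (x a) (x b).
have Fpos : 0 < F by apply: le_lt_trans Fab; rewrite sqr_ge0.
pose p w := \sum_(i < d) x w ord0 i * f i.
have pab : p a - p b = F.
  by rewrite /p /F /D2 -sumrB; apply: eq_bigr => i _; rewrite /f; ring.
pose A w z : R := (z \in N x w)%:R.
pose t := (p a + p b) / 2.
pose g w : R := (t < p w)%R%:R.
pose q w := \sum_z A w z * (p w - p z).
have Aw w z : A w z = A z w by rewrite /A NC.
have g1 w : t < p w -> g w = 1 by move=> h; rewrite /g h.
have g0 w : p w <= t -> g w = 0 by move=> h; rewrite /g ltNge h.
have S1 : \sum_w g w * q w = \sum_w \sum_z A w z * (g w * (p w - p z)).
  by apply: eq_bigr => w _; rewrite /q mulr_sumr; apply: eq_bigr => z _; ring.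
have S2 : \sum_w \sum_z A w z * (g z * (p w - p z)) =
          - \sum_w \sum_z A w z * (g w * (p w - p z)).
  rewrite exchange_big -[RHS]sumrN; apply: eq_bigr => z _; rewrite -[RHS]sumrN.
  by apply: eq_bigr => w _; rewrite Aw; ring.
have Sid : 2 * \sum_w g w * q w =
           \sum_w \sum_z A w z * ((g w - g z) * (p w - p z)).
  have -> : \sum_w \sum_z A w z * ((g w - g z) * (p w - p z)) =
     \sum_w \sum_z A w z * (g w * (p w - p z)) -
     \sum_w \sum_z A w z * (g z * (p w - p z)).
    rewrite -sumrB; apply: eq_bigr => w _; rewrite -sumrB.
    by apply: eq_bigr => z _; ring.
  by rewrite S2 S1; ring.
have T0 w z : 0 <= A w z * ((g w - g z) * (p w - p z)).
  apply: mulr_ge0; first by rewrite /A ler0n.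
  case: (ltrP t (p w)) => hw; case: (ltrP t (p z)) => hz.
  - by rewrite (g1 w hw) (g1 z hz) subrr mul0r.
  - by rewrite (g1 w hw) (g0 z hz) subr0 mul1r; lra.
  - by rewrite (g0 w hw) (g1 z hz) sub0r; nra.
  - by rewrite (g0 w hw) (g0 z hz) subrr mul0r.
have Tsum : F / 2 <= \sum_w \sum_z A w z * ((g w - g z) * (p w - p z)).
  have ha : t < p a by rewrite /t; lra.
  have hb : p b <= t by rewrite /t; lra.
  case: (ltrP t (p m)) => hm.
  - apply: (le_trans _ (@sum_ge_term _ (fun w => \sum_z A w z * ((g w - g z) * (p w - p z))) m _)); last first.
      by move=> w; apply: sumr_ge0 => z _; exact: T0.
    apply: (le_trans _ (@sum_ge_term _ (fun z => A m z * ((g m - g z) * (p m - p z))) b _)); last first.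
      by move=> z; exact: T0.
    rewrite /= {1}/A bm (g1 m hm) (g0 b hb) subr0 !mul1r; rewrite /t in hm; lra.
  - apply: (le_trans _ (@sum_ge_term _ (fun w => \sum_z A w z * ((g w - g z) * (p w - p z))) a _)); last first.
      by move=> w; apply: sumr_ge0 => z _; exact: T0.
    apply: (le_trans _ (@sum_ge_term _ (fun z => A a z * ((g a - g z) * (p a - p z))) m _)); last first.
      by move=> z; exact: T0.
    rewrite /= {1}/A NC am (g1 a ha) (g0 m hm) subr0 !mul1r; rewrite /t in hm; lra.
have CSg : (\sum_w g w * q w) ^+ 2 <= n%:R * \sum_w q w ^+ 2.
  apply: (le_trans (@CS _ g q)); apply: ler_wpM2r.
    by apply: sumr_ge0 => w _; exact: sqr_ge0.
  rewrite (@le_trans _ _ (\sum_(w < n) (1 : R))) //; last by rewrite sumr_const card_ord.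
  apply: ler_sum => w _; case: (ltrP t (p w)) => hw.
    by rewrite (g1 w hw) expr1n.
  by rewrite (g0 w hw) expr0n.
pose L w i := \sum_z A w z * (x w ord0 i - x z ord0 i).
have qL w : q w = \sum_i f i * L w i.
  transitivity (\sum_z \sum_(i < d) f i * (A w z * (x w ord0 i - x z ord0 i))).
    apply: eq_bigr => z _; rewrite /p -sumrB mulr_sumr; apply: eq_bigr => i _; ring.
  by rewrite exchange_big /=; apply: eq_bigr => i _; rewrite /L mulr_sumr.
have Lm w i : L w i = #|N x w|%:R * (x w ord0 i - ybar x w ord0 i).
  have m0 : #|N x w|%:R != 0 :> R by rewrite pnatr_eq0 -lt0n cardN_gt0.
  rewrite /L (eq_bigr (fun z => A w z * x w ord0 i - A w z * x z ord0 i)); last first.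
    by move=> z _; ring.
  rewrite sumrB /A !sumA sumr_const ybarE mulrBr mulrA mulfV // mul1r.
  by rewrite -[x w ord0 i *+ _]mulr_natl.
have qb w : q w ^+ 2 <= F * (#|N x w|%:R ^+ 2 * D2 (x w) (ybar x w)).
  rewrite qL; apply: (le_trans (@CS _ f (L w))); apply: eqle; rewrite /F.
  congr (_ * _); rewrite /D2 mulr_sumr; apply: eq_bigr => i _.
  by rewrite Lm exprMn.
have mb w : #|N x w|%:R ^+ 2 * D2 (x w) (ybar x w) <=
            n%:R * (#|N x w|%:R * D2 (x w) (ybar x w)).
  rewrite expr2 -mulrA; apply: ler_wpM2r.
    by rewrite mulr_ge0 ?ler0n ?D2_ge0.
  by rewrite ler_nat cardN_le.
have h1 : (F / 4) ^+ 2 <= (\sum_w g w * q w) ^+ 2.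
  have hs : F / 4 <= \sum_w g w * q w by lra.
  have hF : 0 <= F / 4 by lra.
  nra.
have h2 : \sum_w q w ^+ 2 <= F * (n%:R * md x).
  apply: (le_trans (ler_sum _ (fun w _ => qb w))); rewrite -mulr_sumr.
  apply: ler_wpM2l; first exact: ltW.
  by rewrite /md mulr_sumr; apply: ler_sum => w _; exact: mb.
have h3 : F * F <= F * (16 * (n%:R ^+ 2 * md x)).
  have h4 := le_trans h1 (le_trans CSg (ler_wpM2l (ler0n _ n) h2)).
  lra.
rewrite ler_pM2l // in h3; exact: (le_trans (ltW Fab) h3).
Qed.


Definition gamma := (4 / delta ^+ 2 + 16 * n%:R ^+ 2 / eps ^+ 2)^-1.

Lemma K_gt0 : 0 < 4 / delta ^+ 2 + 16 * n%:R ^+ 2 / eps ^+ 2.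
Proof.
apply: (@lt_le_trans _ _ (4 / delta ^+ 2)).
  by rewrite divr_gt0 // exprn_gt0.
by rewrite lerDl divr_ge0 ?mulr_ge0 ?exprn_ge0 ?ler0n // ltW.
Qed.

Lemma gamma_gt0 : 0 < gamma.
Proof. by rewrite /gamma invr_gt0 K_gt0. Qed.

Lemma drift_gamma (x : Defs.state R d n) : ~~ stable G eps delta x -> gamma <= md x.
Proof.
move=> /unstable_edge [u [v [uv de dd]]].
rewrite /gamma -div1r ler_pdivrMr ?K_gt0 // mulrDr.
have e2 : 0 < eps ^+ 2 by rewrite exprn_gt0.
have d2 : 0 < delta ^+ 2 by rewrite exprn_gt0.
have t1 : 0 <= md x * (4 / delta ^+ 2) by rewrite mulr_ge0 ?md_ge0 ?divr_ge0 // ltW.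
have t2 : 0 <= md x * (16 * n%:R ^+ 2 / eps ^+ 2).
  by rewrite mulr_ge0 ?md_ge0 ?divr_ge0 ?mulr_ge0 ?exprn_ge0 ?ler0n // ltW.
case: (boolP [exists a, exists m, exists b,
   [&& a \in N x m, b \in N x m & eps ^+ 2 < D2 (x a) (x b)]]).
  move=> /existsP [a /existsP [m /existsP [b /and3P [am bm ab]]]].
  have h := noncl x a m b am bm ab.
  suff : 1 <= md x * (16 * n%:R ^+ 2 / eps ^+ 2) by lra.
  by rewrite mulrA ler_pdivlMr // mul1r; lra.
move=> /existsPn H.
have H' : forall a m b, a \in N x m -> b \in N x m -> D2 (x a) (x b) <= eps ^+ 2.
  move=> a m b am bm; move: (H a) => /existsPn /(_ m) /existsPn /(_ b).
  by rewrite am bm /= -leNgt.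
have h := clique_case x u v H' uv de dd.
suff : 1 <= md x * (4 / delta ^+ 2) by lra.
by rewrite mulrA ler_pdivlMr // mul1r; lra.
Qed.


Lemma rcons_decomp (T : Type) (t : nat) (r : (t.+1).-tuple T) :
  tval r = rcons (belast (thead r) (behead r)) (last (thead r) (behead r)).
Proof. by rewrite -lastI {1}(tuple_eta r). Qed.

Lemma sum_tuple_rcons (T : finType) (t : nat) (F : (t.+1).-tuple T -> R) :
  \sum_(s : (t.+1).-tuple T) F s =
  \sum_(s : t.-tuple T) \sum_(v : T) F (rcons_tuple s v).
Proof.
rewrite pair_big /=.
pose h (p : t.-tuple T * T) := rcons_tuple p.1 p.2.
pose hi (s : (t.+1).-tuple T) : t.-tuple T * T :=
  (belast_tuple (thead s) (behead_tuple s), last (thead s) (behead s)).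
have hK : cancel h hi.
  move=> [s v]; rewrite /h /hi /=; set r := rcons_tuple s v.
  have E : rcons s v = rcons (belast (thead r) (behead r)) (last (thead r) (behead r)).
    by rewrite -rcons_decomp.
  case: (rcons_inj E) => E1 E2.
  by congr (_, _); [apply: val_inj; rewrite /= -E1 | rewrite -E2].
have hiK : cancel hi h.
  by move=> r; apply: val_inj; rewrite /h /hi /= [RHS]rcons_decomp.
rewrite (reindex h) /=; last by exists hi => p _; [exact: hK | exact: hiK].
by [].
Qed.


Definition Bset (x0 : Defs.state R d n) t := [set s : t.-tuple 'I_n |
  [forall k : 'I_t.+1, ~~ stable G eps delta (run G eps x0 (take k s))]].

Definition Av (x0 : Defs.state R d n) t :=
  \sum_(s : t.-tuple 'I_n) Phi (run G eps x0 s).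

Lemma sum_ind (T : finType) (B : {set T}) : \sum_s (s \in B)%:R = #|B|%:R :> R.
Proof.
rewrite (eq_bigr (fun s => if s \in B then 1 else 0)); last by move=> s _; case: (s \in B).
by rewrite -big_mkcond sumr_const.
Qed.

Lemma Av_step x0 t :
  Av x0 t.+1 <= n%:R * Av x0 t - 2 * gamma * #|Bset x0 t|%:R.
Proof.
rewrite /Av sum_tuple_rcons.
have H : forall s : t.-tuple 'I_n,
    \sum_v Phi (run G eps x0 (rcons_tuple s v)) <=
    n%:R * Phi (run G eps x0 s) - 2 * gamma * (s \in Bset x0 t)%:R.
  move=> s.
  rewrite (eq_bigr (fun v => Phi (hk_update G eps (run G eps x0 s) v))); last first.
    by move=> v _; rewrite /run /= foldl_rcons.
  apply: (le_trans (drift_sum _)).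
  case: (boolP (s \in Bset x0 t)) => sB.
    have : ~~ stable G eps delta (run G eps x0 s).
      move: sB; rewrite inE => /forallP /(_ ord_max) /=.
      by rewrite take_oversize ?size_tuple.
    move/drift_gamma => hg; rewrite mulr1; lra.
  by rewrite mulr0 subr0; have := md_ge0 (run G eps x0 s); lra.
apply: (le_trans (ler_sum _ (fun s _ => H s))).
by rewrite sumrB -mulr_sumr -mulr_sumr sum_ind.
Qed.

Lemma tail_probE x0 t :
  tail_prob G eps delta x0 t = #|Bset x0 t|%:R / (n ^ t)%:R.
Proof. by []. Qed.

Lemma partial_pos x0 (n0 : (0 < n)%N) M :
  \sum_(k < M) tail_prob G eps delta x0 k <= n%:R / (2 * gamma) * Phi x0.
Proof.
have nn0 : 0 < n%:R :> R by rewrite ltr0n.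
have g0 := gamma_gt0.
pose a k := Av x0 k / (n ^ k)%:R.
have cpos k : 0 < (n ^ k)%:R :> R by rewrite ltr0n expn_gt0 n0.
have step k : a k.+1 <= a k - (2 * gamma / n%:R) * tail_prob G eps delta x0 k.
  rewrite /a tail_probE.
  apply: (le_trans (ler_wpM2r _ (Av_step x0 k))).
    by rewrite invr_ge0 ltW.
  apply: eqle; rewrite expnS natrM.
  have c0 : (n ^ k)%:R != 0 :> R by rewrite gt_eqF ?cpos.
  have n1 : n%:R != 0 :> R by rewrite gt_eqF.
  by field; rewrite c0 n1.
have ind : forall K, (2 * gamma / n%:R) * \sum_(k < K) tail_prob G eps delta x0 k
   <= a 0%N - a K.
  elim=> [|K IH]; first by rewrite big_ord0 mulr0 subrr.
  rewrite big_ord_recr /= mulrDr; have := step K; lra.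
have aN : 0 <= a M.
  by rewrite /a divr_ge0 ?ler0n //; apply: sumr_ge0 => s _; exact: Phi_ge0.
have a0 : a 0%N = Phi x0.
  rewrite /a /Av expn0 divr1 (big_pred1 [tuple]) //.
  by move=> s /=; apply/esym/eqP; exact: tuple0.
have hS := ind M; rewrite a0 in hS.
have hc : 0 < 2 * gamma / n%:R by rewrite divr_gt0 ?mulr_gt0.
rewrite -(@ler_pM2l _ (2 * gamma / n%:R)) //.
apply: (le_trans hS).
have -> : 2 * gamma / n%:R * (n%:R / (2 * gamma) * Phi x0) = Phi x0.
  have n1 : n%:R != 0 :> R by rewrite gt_eqF.
  have g1 : gamma != 0 by rewrite gt_eqF.
  by field; rewrite n1 g1.
lra.
Qed.

Lemma partial_bound (x0 : Defs.state R d n) M :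
  \sum_(k < M) tail_prob G eps delta x0 k <=
  8%:R * n%:R ^+ 3 * (n%:R ^+ 2 + (eps / delta) ^+ 2).
Proof.
case: (posnP n) => n0.
  rewrite big1 ?mulr_ge0 ?addr_ge0 ?sqr_ge0 ?exprn_ge0 ?ler0n // => k _.
  rewrite tail_probE (_ : #|Bset x0 k| = 0%N) ?mul0r //.
  apply/eqP; rewrite cards_eq0; apply/eqP/setP => s; rewrite !inE.
  apply/negbTE; apply/forallPn.
  exists ord0; rewrite negbK; apply/forallP => u.
  by have := ltn_ord u; rewrite {2}n0.
apply: (le_trans (partial_pos x0 n0 M)).
have hc : 0 <= n%:R / (2 * gamma) by rewrite divr_ge0 ?ler0n ?mulr_ge0 // ltW ?gamma_gt0.
apply: (le_trans (ler_wpM2l hc (Phi_le x0))).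
have e0 : eps != 0 by rewrite gt_eqF.
have dl0 : delta != 0 by rewrite gt_eqF.
have K0 : 4 / delta ^+ 2 + 16 * n%:R ^+ 2 / eps ^+ 2 != 0 by rewrite gt_eqF ?K_gt0.
have -> : n%:R / (2 * gamma) * (n%:R ^+ 2 * eps ^+ 2) =
   2 * (n%:R ^+ 3 * (eps / delta) ^+ 2) + 8 * n%:R ^+ 5.
  rewrite /gamma; field; rewrite dl0 e0 /=.
  have h1 : 0 < eps ^+ 2 by rewrite exprn_gt0.
  have h2 : 0 <= n%:R ^+ 2 * delta ^+ 2 :> R by rewrite mulr_ge0 ?exprn_ge0 ?ler0n // ltW.
  by rewrite gt_eqF //; lra.
have Z0 : 0 <= n%:R ^+ 3 * (eps / delta) ^+ 2 :> R by rewrite mulr_ge0 ?sqr_ge0 ?exprn_ge0 ?ler0n.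
move: Z0; move: ((eps / delta) ^+ 2) => Z Z0.
have -> : 8%:R * n%:R ^+ 3 * (n%:R ^+ 2 + Z) = 8 * n%:R ^+ 5 + 8 * (n%:R ^+ 3 * Z) :> R.
  by ring.
lra.
Qed.

End HKProof.

Theorem theorem2 :
  exists C : nat, forall (R : realType) (d n : nat) (eps delta : R)
    (x0 : state R d n),
    0 < eps -> 0 < delta ->
    (@expected_conv_time R d n (@complete_graph n) eps delta x0 <=
       ((C%:R * n%:R ^+ 3 * (n%:R ^+ 2 + (eps / delta) ^+ 2) : R))%:E)%E.
Proof.
exists 8%N => R d n eps delta x0 he hd.
have t0 : forall k, (0 <= (tail_prob (@complete_graph n) eps delta x0 k)%:E)%E.
  by move=> k; rewrite lee_fin /tail_prob divr_ge0 ?ler0n.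
rewrite /expected_conv_time.
apply: lime_le; first exact: is_cvg_nneseries.
apply: nearW => M.
rewrite sumEFin lee_fin big_mkord.
exact: (@partial_bound R d n eps delta he hd x0 M).
Qed.
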